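(* Let $\langle \mathscr{A} \mid \mathscr{R} \rangle$ be a $C(2)$ monoid presentation and let $u$ be a relation word. Then for any $v \in \mathscr{A}^*$ we have $u \equiv_\mathscr{R} v$ if and only if there exist $n \geq 1$ and words $u = u_1, u_2, \dots, u_n = v$ such that for each $1 \leq i < n$ either $(u_i, u_{i+1}) \in \mathscr{R}$ or $(u_{i+1}, u_i) \in \mathscr{R}$.
   Context: A monoid presentation $\langle \mathscr{A} \mid \mathscr{R} \rangle$ consists of an alphabet $\mathscr{A}$ and a set $\mathscr{R} \subseteq \mathscr{A}^* \times \mathscr{A}^*$ of relations; $\equiv_\mathscr{R}$ denotes the smallest congruence on the free monoid $\mathscr{A}^*$ containing $\mathscr{R}$, and the monoid presented is $\mathscr{A}^*/\equiv_\mathscr{R}$. A relation word is a word occurring as one side of a relation in $\mathscr{R}$. A piece is a word which occurs as a factor of two distinct relation words, or in two different (possibly overlapping) positions within one relation word; by convention the empty word is always a piece. For a positive integer $n$, the presentation is $C(n)$ if no relation word can be written as a product of strictly fewer than $n$ pieces. *)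

(* Defs.v *)
From mathcomp Require Import all_boot.
Set Implicit Arguments. Unset Strict Implicit. Unset Printing Implicit Defensive.

Section Presentations.
Variable A : eqType.
Implicit Types (R : seq A -> seq A -> Prop) (u v w x : seq A).

Definition relation_word R w : Prop := exists v, R w v \/ R v w.

Definition factor x w : Prop := exists p s, w = p ++ x ++ s.

Definition piece R x : Prop :=
  x = [::]
  \/ (exists w1 w2, [/\ relation_word R w1, relation_word R w2, w1 <> w2,
                        factor x w1 & factor x w2])
  \/ (exists w p1 s1 p2 s2, [/\ relation_word R w, w = p1 ++ x ++ s1,
                               w = p2 ++ x ++ s2 & size p1 <> size p2]).

Definition C_cond R (n : nat) : Prop :=
  forall w (ps : seq (seq A)), relation_word R w ->
    size ps < n -> (forall x, x \in ps -> piece R x) -> w <> flatten ps.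

Definition is_congruence (E : seq A -> seq A -> Prop) : Prop :=
  [/\ forall u, E u u,
      forall u v, E u v -> E v u,
      forall u v w, E u v -> E v w -> E u w
    & forall u v p s, E u v -> E (p ++ u ++ s) (p ++ v ++ s)].

Definition cong_R R u v : Prop :=
  forall E, is_congruence E -> (forall a b, R a b -> E a b) -> E u v.

End Presentations.

(* Main.v *)
Require Import Defs.
From mathcomp Require Import all_boot.
From Stdlib Require Import Lia.
From mathcomp Require Import zify.

Section Aux.
Variable A : eqType.
Variable R : seq A -> seq A -> Prop.

Inductive ec : seq A -> seq A -> Prop :=
| ec_step p l r s : (R l r \/ R r l) -> ec (p ++ l ++ s) (p ++ r ++ s)
| ec_refl x : ec x x
| ec_sym x y : ec x y -> ec y x
| ec_trans x y z : ec x y -> ec y z -> ec x z.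

Lemma ec_cong : is_congruence ec.
Proof.
split.
- exact: ec_refl.
- exact: ec_sym.
- exact: ec_trans.
- move=> u v p s H; elim: H => {u v}.
  + move=> p0 l r s0 H.
    have E1 : p ++ (p0 ++ l ++ s0) ++ s = (p ++ p0) ++ l ++ (s0 ++ s) by rewrite !catA.
    have E2 : p ++ (p0 ++ r ++ s0) ++ s = (p ++ p0) ++ r ++ (s0 ++ s) by rewrite !catA.
    rewrite E1 E2; exact: ec_step.
  + move=> x; exact: ec_refl.
  + move=> x y _ H; exact: ec_sym.
  + move=> x y z _ H1 _ H2; exact: ec_trans H1 H2.
Qed.

Lemma rw_unique w p l s : C_cond R 2 -> relation_word R w -> relation_word R l ->
  w = p ++ l ++ s -> p = [::] /\ s = [::].
Proof.
move=> HC Hw Hl He.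
case: (boolP (l == w)) => [/eqP El|Ne].
- have : size w = size p + size l + size s by rewrite He !size_cat addnA.
  rewrite El => Hsz.
  have Hp0 : size p = 0 by lia.
  have Hs0 : size s = 0 by lia.
  by move/size0nil: Hp0 => ->; move/size0nil: Hs0 => ->.
- exfalso.
  have Hp : piece R l.
    right; left; exists l, w; split => //.
    + by move=> E; rewrite E eqxx in Ne.
    + by exists [::], [::]; rewrite cats0.
    + by exists p, s.
  apply: (HC l [:: l] Hl) => //.
  + by move=> x; rewrite inE => /eqP ->.
  + by rewrite /= cats0.
Qed.

End Aux.

Theorem proposition3 (A : eqType) (R : seq A -> seq A -> Prop) (u : seq A) :
  C_cond R 2 -> relation_word R u ->
  forall v : seq A,
    cong_R R u v <->
    exists (n : nat) (f : nat -> seq A),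
      [/\ 1 <= n, f 1 = u, f n = v &
          forall i, 1 <= i < n -> R (f i) (f i.+1) \/ R (f i.+1) (f i)].
Proof.
move=> HC Hu v.
set S := fun x => exists (n : nat) (f : nat -> seq A),
      [/\ 1 <= n, f 1 = u, f n = x &
          forall i, 1 <= i < n -> R (f i) (f i.+1) \/ R (f i.+1) (f i)].
have Srw : forall x, S x -> relation_word R x.
  move=> x [n [f [Hn H1 Hx Hs]]].
  case: n Hn Hx Hs => [//|[|n]] _ Hx Hs.
  - by rewrite -Hx H1.
  - have := Hs n.+1 (ltnSn _); rewrite Hx.
    by case=> H; [exists (f n.+1); right | exists (f n.+1); left].
have Sext : forall x y, S x -> (R x y \/ R y x) -> S y.
  move=> x y [n [f [Hn H1 Hx Hs]]] Hr.
  exists n.+1, (fun i => if i == n.+1 then y else f i); split.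
  - by [].
  - by case: n Hn Hx Hs.
  - by rewrite eqxx.
  - move=> i /andP [Hi Hin].
    rewrite eqSS; case: (boolP (i == n.+1)) => [/eqP Ei|Ni].
    + by rewrite Ei ltnn in Hin.
    case: (boolP (i == n)) => [/eqP Ei|Nin].
    * by rewrite Ei Hx.
    * apply: Hs; rewrite Hi /=; rewrite ltnS in Hin.
      by rewrite ltn_neqAle Nin Hin.
have Sstep : forall x y, ec A R x y -> (S x <-> S y).
  move=> x y H; elim: H => {x y}.
  - move=> p l r s Hr.
    have Hl : relation_word R l by case: Hr => H; exists r; [left|right].
    have Hr' : relation_word R r by case: Hr => H; exists l; [right|left].
    split => HS.
    + have [Hp Hs] := @rw_unique A R _ _ _ _ HC (Srw _ HS) Hl erefl.
      subst p s; rewrite /= !cats0 in HS *; apply: (Sext _ _ HS); tauto.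
    + have [Hp Hs] := @rw_unique A R _ _ _ _ HC (Srw _ HS) Hr' erefl.
      subst p s; rewrite /= !cats0 in HS *; apply: (Sext _ _ HS); tauto.
  - by [].
  - move=> x y _ H; tauto.
  - move=> x y z _ H1 _ H2; tauto.
split.
- move=> Hc.
  have He : ec A R u v.
    apply: Hc; first exact: ec_cong.
    move=> a b Hab.
    have := @ec_step A R [::] a b [::] (or_introl Hab).
    by rewrite /= !cats0.
  apply/(Sstep _ _ He).
  exists 1, (fun _ => u); split => //.
  move=> i /andP [H1 H2]; exfalso; lia.
- move=> [n [f [Hn H1 Hv Hs]]] E HE HR; case: HE => Er Es Et Ec.
  rewrite -H1 -Hv.
  clear Hv.
  elim: n Hn Hs => [//|n IH] _ Hs.
  case: n IH Hs => [|n] IH Hs; first exact: Er.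
  apply: (Et _ (f n.+1)).
  + apply: IH => // i /andP [Ha Hb]; apply: Hs; rewrite Ha /=; exact: ltnW.
  + have := Hs n.+1 (ltnSn _); case=> H; [exact: HR | apply: Es; exact: HR].
Qed.
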